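(* Let $L>0$, $l\ge2$ an integer, and let real coefficients $a_{l+j,l-j},b_{l+j,l-j}$ ($j=1,\dots,l-1$) satisfy the Coefficient Conditions. Then there is a constant $M>0$ depending only on $l$ and these coefficients such that every $u\in C^{2l+1}([0,L])$ satisfying the Boundary Conditions obeys $$\sum_{j=1}^{l}(-1)^{j+1}(D^{2j+1}u,u)\ \ge\ M\Big(\sum_{i=1}^{l-1}\big[(D^iu(L))^2+(D^iu(0))^2\big]+(D^lu(0))^2\Big)\ \ge 0.$$
   Context: $D^i=\frac{d^i}{dx^i}$, $(f,g)=\int_0^L fg\,dx$. Boundary Conditions: $u(0)=u(L)=D^lu(L)=0$; $D^{l+j}u(0)=a_{l+j,l-j}D^{l-j}u(0)$ and $D^{l+j}u(L)=b_{l+j,l-j}D^{l-j}u(L)$ for $j=1,\dots,l-1$. Coefficient Conditions: - If $l=2$: $b_{3,1}>\tfrac12$ and $a_{3,1}<\tfrac12$. - If $l=3$: $b_{5,1}<-\tfrac12$, $b_{4,2}>\tfrac12$, $a_{5,1}>\tfrac12$, $a_{4,2}<\tfrac12$. - If $l\ge4$: $b_{l+1,l-1}>l-2$, $b_{l+2,l-2}<2-l$, $a_{l+1,l-1}<5-2l$, $a_{l+2,l-2}>2l-5$; for odd $j$ with $3\le j\le l-1$: $b_{l+j,l-j}>l-2+\frac12\big(\sum_{m=1}^{(j-1)/2}|b_{l+2m-1,l-2m+1}|\big)^2$ and $a_{l+j,l-j}<5-2l-\frac12\big(\sum_{m=1}^{(j-1)/2}|a_{l+2m-1,l-2m+1}|\big)^2$;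 for even $j$ with $4\le j\le l-1$: $b_{l+j,l-j}<2-l-\frac12\big(\sum_{m=1}^{j/2-1}|b_{l+2m,l-2m}|\big)^2$ and $a_{l+j,l-j}>2l-5+\frac12\big(\sum_{m=1}^{j/2-1}|a_{l+2m,l-2m}|\big)^2$. *)

(* Defs.v *)
From Stdlib Require Import Reals Lra Lia Classical ClassicalEpsilon.
Open Scope R_scope.

Fixpoint sum1 (f : nat -> R) (n : nat) : R :=
  match n with
  | O => 0
  | S n' => sum1 f n' + f n
  end.

Definition cont_on (f : R -> R) (a b : R) : Prop :=
  forall x, a <= x <= b -> forall eps, 0 < eps ->
    exists delta, 0 < delta /\
      forall y, a <= y <= b -> Rabs (y - x) < delta -> Rabs (f y - f x) < eps.

(* d is the family of derivatives D^0 u = d 0, ..., D^k u = d k of a function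
   u = d 0 in C^k([0,L]): every d i (i <= k) is continuous on [0,L], and
   d (i+1) is the derivative of d i on (0,L); values at the endpoints are the
   (one-sided) derivatives, i.e. the continuous extensions. *)
Definition Ck_on (k : nat) (L : R) (d : nat -> R -> R) : Prop :=
  (forall i, (i <= k)%nat -> cont_on (d i) 0 L) /\
  (forall i x, (i < k)%nat -> 0 < x < L -> derivable_pt_lim (d i) x (d (S i) x)).

(* Riemann integral of f over [a,b] (0 if f not Riemann integrable; the value
   does not depend on the integrability proof, RiemannInt_P5). *)
Definition RInt (f : R -> R) (a b : R) : R :=
  match excluded_middle_informative (inhabited (Riemann_integrable f a b)) with
  | left h => RiemannInt (epsilon h (fun _ => True))
  | right _ => 0
  end.

Definition ip (L : R) (f g : R -> R) : R := RInt (fun x => f x * g x) 0 L.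

Definition BC (l : nat) (L : R) (a b : nat -> nat -> R) (d : nat -> R -> R) : Prop :=
  d 0%nat 0 = 0 /\ d 0%nat L = 0 /\ d l L = 0 /\
  (forall j, (1 <= j <= l - 1)%nat ->
     d (l + j)%nat 0 = a (l + j)%nat (l - j)%nat * d (l - j)%nat 0 /\
     d (l + j)%nat L = b (l + j)%nat (l - j)%nat * d (l - j)%nat L).

Definition CoefCond (l : nat) (a b : nat -> nat -> R) : Prop :=
  (l = 2%nat -> b 3%nat 1%nat > 1/2 /\ a 3%nat 1%nat < 1/2) /\
  (l = 3%nat -> b 5%nat 1%nat < -(1/2) /\ b 4%nat 2%nat > 1/2 /\
                a 5%nat 1%nat > 1/2 /\ a 4%nat 2%nat < 1/2) /\
  ((4 <= l)%nat ->
     b (l+1)%nat (l-1)%nat > INR l - 2 /\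
     b (l+2)%nat (l-2)%nat < 2 - INR l /\
     a (l+1)%nat (l-1)%nat < 5 - 2 * INR l /\
     a (l+2)%nat (l-2)%nat > 2 * INR l - 5 /\
     (forall j, (3 <= j <= l - 1)%nat -> Nat.odd j = true ->
        b (l+j)%nat (l-j)%nat > INR l - 2 + 1/2 *
          (sum1 (fun m => Rabs (b (l + 2*m - 1)%nat (l - 2*m + 1)%nat)) ((j-1)/2)) ^ 2 /\
        a (l+j)%nat (l-j)%nat < 5 - 2 * INR l - 1/2 *
          (sum1 (fun m => Rabs (a (l + 2*m - 1)%nat (l - 2*m + 1)%nat)) ((j-1)/2)) ^ 2) /\
     (forall j, (4 <= j <= l - 1)%nat -> Nat.even j = true ->
        b (l+j)%nat (l-j)%nat < 2 - INR l - 1/2 *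
          (sum1 (fun m => Rabs (b (l + 2*m)%nat (l - 2*m)%nat)) (j/2 - 1)) ^ 2 /\
        a (l+j)%nat (l-j)%nat > 2 * INR l - 5 + 1/2 *
          (sum1 (fun m => Rabs (a (l + 2*m)%nat (l - 2*m)%nat)) (j/2 - 1)) ^ 2)).

(* Main.v *)
Require Import Defs.
From Stdlib Require Import Reals Lra Lia Classical ClassicalEpsilon.
Open Scope R_scope.


Lemma cont_eps f x : continuity_pt f x -> forall eps, 0 < eps ->
  exists del, 0 < del /\ forall y, Rabs (y - x) < del -> Rabs (f y - f x) < eps.
Proof.
  intros H eps He. destruct (H eps He) as [del [Hd H2]]. exists del; split; auto.
  intros y Hy. destruct (Req_dec y x) as [->|Hne].
  - rewrite Rminus_diag, Rabs_R0; auto.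
  - apply (H2 y). split. split; [exact I| auto]. exact Hy.
Qed.

Lemma eps_cont f x : (forall eps, 0 < eps ->
  exists del, 0 < del /\ forall y, Rabs (y - x) < del -> Rabs (f y - f x) < eps) ->
  continuity_pt f x.
Proof.
  intros H eps He. destruct (H eps He) as [del [Hd H2]]. exists del; split; auto.
  intros y [_ Hy]. apply H2. exact Hy.
Qed.

Definition clamp (L y : R) := Rmax 0 (Rmin y L).

Lemma clamp_in L y : 0 <= L -> 0 <= clamp L y <= L.
Proof. intros; unfold clamp, Rmax, Rmin; repeat destruct Rle_dec; lra. Qed.
Lemma clamp_id L y : 0 <= y <= L -> clamp L y = y.
Proof. intros; unfold clamp, Rmax, Rmin; repeat destruct Rle_dec; lra. Qed.
Lemma clamp_lip L x y : 0 <= L -> Rabs (clamp L y - clamp L x) <= Rabs (y - x).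
Proof. intros; unfold clamp, Rmax, Rmin; repeat destruct Rle_dec;
  unfold Rabs; repeat destruct Rcase_abs; lra. Qed.

Lemma cont_on_clamp f L : 0 <= L -> cont_on f 0 L ->
  forall x, continuity_pt (fun y => f (clamp L y)) x.
Proof.
  intros HL Hc x. apply eps_cont. intros eps He.
  destruct (Hc (clamp L x) (clamp_in L x HL) eps He) as [del [Hd H2]].
  exists del; split; auto. intros y Hy. apply H2. apply clamp_in; auto.
  eapply Rle_lt_trans. apply clamp_lip; auto. auto.
Qed.

Lemma dpl_ext f g x a b : derivable_pt_lim f x a -> a = b -> (forall y, f y = g y) ->
  derivable_pt_lim g x b.
Proof.
  intros H <- Hfg eps He. destruct (H eps He) as [del Hd]. exists del.
  intros h Hh Hh2. rewrite <- !Hfg. apply Hd; auto.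
Qed.

Lemma small_zero a : (forall eps, 0 < eps -> Rabs a < 2 * eps) -> a = 0.
Proof.
  intros H. destruct (Req_dec a 0) as [|Hn]; auto. exfalso.
  assert (Hp: 0 < Rabs a) by (apply Rabs_pos_lt; auto).
  specialize (H (Rabs a / 4) ltac:(lra)). lra.
Qed.

Lemma ftc L h G : 0 < L ->
  (forall x, continuity_pt (fun y => h (clamp L y)) x) ->
  (forall x, continuity_pt (fun y => G (clamp L y)) x) ->
  (forall x, 0 < x < L -> derivable_pt_lim G x (h x)) ->
  RInt h 0 L = G L - G 0.
Proof.
  intros HL Hh HG HD.
  set (hc := fun y => h (clamp L y)).
  assert (hle : 0 <= L) by lra.
  assert (C0 : forall x, 0 <= x <= L -> continuity_pt hc x) by (intros; apply Hh).
  set (P := primitive hle (FTC_P1 hle C0)).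
  pose proof (continuity_implies_RiemannInt hle C0) as pr.
  assert (Hext : forall x, Rmin 0 L <= x <= Rmax 0 L -> hc x = h x).
  { intros x Hx. unfold hc. rewrite clamp_id; auto.
    rewrite Rmin_left, Rmax_right in Hx; lra. }
  pose proof (@Riemann_integrable_ext hc h 0 L Hext pr) as prh.
  assert (E1 : RInt h 0 L = RiemannInt prh).
  { unfold RInt. destruct (excluded_middle_informative _) as [i|n].
    - apply RiemannInt_P5.
    - exfalso; apply n; constructor; exact prh. }
  rewrite E1. rewrite (RiemannInt_P18 prh pr hle).
  2:{ intros x Hx. unfold hc. rewrite clamp_id; auto. lra. }
  rewrite (RiemannInt_P20 hle (FTC_P1 hle C0) pr). fold P.
  assert (HPd : forall x, 0 <= x <= L -> derivable_pt_lim P x (hc x)).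
  { intros x Hx. apply RiemannInt_P28; auto. }
  assert (Hin : forall x y, 0 < x -> x < y -> y < L -> G y - P y = G x - P x).
  { intros x y Hx Hxy Hy.
    destruct (MVT_cor2 (fun z => G z - P z) (fun _ => 0) x y Hxy) as [c [Hc _]].
    - intros c Hc. apply (dpl_ext (fun z => G z - P z) _ c (h c - hc c)).
      + apply derivable_pt_lim_minus. apply HD; lra. apply HPd; lra.
      + unfold hc; rewrite clamp_id; lra.
      + auto.
    - lra. }
  set (Dc := fun z => G (clamp L z) - P z).
  assert (HPc : forall x, 0 <= x <= L -> continuity_pt P x).
  { intros x Hx. apply derivable_continuous_pt. exists (hc x). apply HPd; auto. }
  assert (HDc : forall x, 0 <= x <= L -> continuity_pt Dc x).
  { intros x Hx. apply continuity_pt_minus. apply HG. apply HPc; auto. }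
  assert (E0 : Dc 0 = G 0 - P 0) by (unfold Dc; rewrite clamp_id; lra).
  assert (EL : Dc L = G L - P L) by (unfold Dc; rewrite clamp_id; lra).
  assert (Dc L - Dc 0 = 0).
  { apply small_zero. intros eps He.
    destruct (cont_eps _ _ (HDc 0 ltac:(lra)) eps He) as [d0 [Hd0 H0]].
    destruct (cont_eps _ _ (HDc L ltac:(lra)) eps He) as [d1 [Hd1 H1]].
    set (x := Rmin (d0/2) (L/3)). set (y := Rmax (L - d1/2) (2*L/3)).
    assert (Hx : 0 < x /\ x <= L/3 /\ x < d0).
    { unfold x, Rmin; destruct Rle_dec; lra. }
    assert (Hy : 2*L/3 <= y /\ y < L /\ L - y < d1).
    { unfold y, Rmax; destruct Rle_dec; lra. }
    specialize (H0 x ltac:(rewrite Rminus_0_r, Rabs_pos_eq; lra)).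
    specialize (H1 y ltac:(rewrite Rabs_left; lra)).
    assert (Dc y = Dc x).
    { unfold Dc. rewrite !clamp_id by lra. apply Hin; lra. }
    replace (Dc L - Dc 0) with (-(Dc y - Dc L) + (Dc x - Dc 0)) by lra.
    eapply Rle_lt_trans. apply Rabs_triang. rewrite Rabs_Ropp. lra. }
  lra.
Qed.


Lemma sum1_ext f g n : (forall k, (1 <= k <= n)%nat -> f k = g k) -> sum1 f n = sum1 g n.
Proof. induction n; simpl; intros H; auto. rewrite IHn, (H (S n)); auto; intros; try lia; apply H; lia. Qed.
Lemma sum1_scal c f n : sum1 (fun k => c * f k) n = c * sum1 f n.
Proof. induction n; simpl; [ring| rewrite IHn; ring]. Qed.
Lemma sum1_plus f g n : sum1 (fun k => f k + g k) n = sum1 f n + sum1 g n.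
Proof. induction n; simpl; [ring| rewrite IHn; ring]. Qed.
Lemma sum1_minus f g n : sum1 (fun k => f k - g k) n = sum1 f n - sum1 g n.
Proof. induction n; simpl; [ring| rewrite IHn; ring]. Qed.

Definition Ssum (d : nat -> R -> R) (j n : nat) (y : R) : R :=
  sum1 (fun t => (-1)^t * (d (j+t)%nat y * d (j-t)%nat y)) n.
Definition Gfun (d : nat -> R -> R) (j : nat) (y : R) : R :=
  (-1)^j * (Ssum d j j y + d j y * d j y / 2).
Definition Phi (x : nat -> R) (j : nat) : R :=
  - (x j * x j) / 2 + sum1 (fun t => (-1)^(t+1) * (x (j+t)%nat * x (j-t)%nat)) j.

Lemma Ssum_deriv d L k j n x :
  (forall i y, (i < k)%nat -> 0 < y < L -> derivable_pt_lim (d i) y (d (S i) y)) ->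
  (n <= j)%nat -> (j + n < k)%nat -> 0 < x < L ->
  derivable_pt_lim (Ssum d j n) x
    ((-1)^n * (d (j+n+1)%nat x * d (j-n)%nat x) - d (j+1)%nat x * d j x).
Proof.
  intros Hd. induction n; intros Hn Hk Hx.
  - apply (dpl_ext (fun _ => 0) _ x 0).
    + apply derivable_pt_lim_const.
    + replace (j+0+1)%nat with (j+1)%nat by lia. rewrite Nat.sub_0_r. simpl; ring.
    + intros; reflexivity.
  - set (f := fun y => (d (j + S n)%nat y * d (j - S n)%nat y)).
    apply (dpl_ext (fun y => Ssum d j n y + (-1)^(S n) * f y) _ x
      (((-1)^n * (d (j+n+1)%nat x * d (j-n)%nat x) - d (j+1)%nat x * d j x)
        + (-1)^(S n) * (d (S (j + S n)) x * d (j - S n)%nat x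
                         + d (j + S n)%nat x * d (S (j - S n)) x))).
    + apply derivable_pt_lim_plus. apply IHn; [lia|lia|exact Hx].
      apply (derivable_pt_lim_scal f). unfold f.
      apply (derivable_pt_lim_mult (d (j + S n)%nat) (d (j - S n)%nat)).
      apply Hd; auto; lia. apply Hd; auto; lia.
    + replace (S (j - S n)) with (j - n)%nat by lia.
      replace (S (j + S n)) with (j + S n + 1)%nat by lia.
      replace (j + n + 1)%nat with (j + S n)%nat by lia. simpl; ring.
    + intros y. unfold Ssum, f. simpl. reflexivity.
Qed.

Lemma Gfun_deriv d L k j x :
  (forall i y, (i < k)%nat -> 0 < y < L -> derivable_pt_lim (d i) y (d (S i) y)) ->
  (j + j < k)%nat -> 0 < x < L ->
  derivable_pt_lim (Gfun d j) x (d (2*j+1)%nat x * d 0%nat x).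
Proof.
  intros Hd Hk Hx.
  apply (dpl_ext (mult_real_fct ((-1)^j) (fun y => Ssum d j j y + mult_real_fct (/2) (fun y => d j y * d j y) y)) _ x
     ((-1)^j * (((-1)^j * (d (j+j+1)%nat x * d (j-j)%nat x) - d (j+1)%nat x * d j x)
       + / 2 * (d (S j) x * d j x + d j x * d (S j) x)))).
  - apply derivable_pt_lim_scal. apply derivable_pt_lim_plus.
    apply (Ssum_deriv d L k); auto; lia.
    apply derivable_pt_lim_scal.
    apply (derivable_pt_lim_mult (d j) (d j)); apply Hd; auto; lia.
  - replace (j - j)%nat with 0%nat by lia. replace (j+j+1)%nat with (2*j+1)%nat by lia.
    replace (S j) with (j+1)%nat by lia.
    assert (E : (-1)^j * (-1)^j = 1).
    { rewrite <- pow_add. replace (j+j)%nat with (2*j)%nat by lia. rewrite pow_mult.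
      replace ((-1)^2) with 1 by (simpl; ring). apply pow1. }
    transitivity (((-1)^j * (-1)^j) * (d (2 * j + 1)%nat x * d 0%nat x)).
    2: rewrite E; ring. field.
  - intros y. unfold Gfun, mult_real_fct. unfold Rdiv. ring.
Qed.

Lemma cont_ext f g x : continuity_pt f x -> (forall y, f y = g y) -> continuity_pt g x.
Proof.
  intros H E. apply eps_cont. intros eps He. destruct (cont_eps f x H eps He) as [del [Hd H2]].
  exists del; split; auto. intros y Hy; rewrite <- !E; auto.
Qed.

Lemma Gfun_cont d L k j x :
  (forall i, (i <= k)%nat -> continuity_pt (fun y => d i (clamp L y)) x) ->
  (j + j <= k)%nat ->
  continuity_pt (fun y => Gfun d j (clamp L y)) x.
Proof.
  intros Hc Hk.
  assert (HS : forall n, (n <= j)%nat -> continuity_pt (fun y => Ssum d j n (clamp L y)) x).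
  { induction n; intros Hn.
    - apply (cont_ext (fct_cte 0)). apply continuity_pt_const. intros ? ?; auto.
      intros; unfold fct_cte, Ssum; reflexivity.
    - apply (cont_ext (fun y => Ssum d j n (clamp L y) + (-1)^(S n) *
          (d (j + S n)%nat (clamp L y) * d (j - S n)%nat (clamp L y)))).
      + apply continuity_pt_plus. apply IHn; lia.
        apply (continuity_pt_scal (fun y => (d (j + S n)%nat (clamp L y) * d (j - S n)%nat (clamp L y)))).
        apply (continuity_pt_mult (fun y => d (j + S n)%nat (clamp L y))
                                   (fun y => d (j - S n)%nat (clamp L y))); apply Hc; lia.
      + intros; unfold Ssum; simpl; reflexivity. }
  apply (cont_ext (mult_real_fct ((-1)^j) (fun y => Ssum d j j (clamp L y) +
      d j (clamp L y) * d j (clamp L y) * / 2))).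
  - apply continuity_pt_scal. apply continuity_pt_plus. apply HS; lia.
    apply (continuity_pt_mult (fun y => d j (clamp L y) * d j (clamp L y)) (fun _ => /2)).
    apply (continuity_pt_mult (fun y => d j (clamp L y)) (fun y => d j (clamp L y))); apply Hc; lia.
    apply continuity_pt_const. intros ? ?; auto.
  - intros; unfold Gfun, mult_real_fct, Rdiv; reflexivity.
Qed.

Lemma Gfun_Phi d j y : (-1)^(j+1) * Gfun d j y = Phi (fun i => d i y) j.
Proof.
  unfold Gfun, Phi, Ssum. rewrite <- Rmult_assoc, <- pow_add.
  replace ((-1)^(j+1+j)) with (-1).
  2:{ replace (j+1+j)%nat with (S (2*j)) by lia. rewrite <- tech_pow_Rmult, pow_mult.
      replace ((-1)^2) with 1 by (simpl; ring). rewrite pow1; ring. }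
  rewrite Rmult_plus_distr_l. rewrite <- sum1_scal.
  replace (sum1 (fun k => -1 * ((-1) ^ k * (d (j + k)%nat y * d (j - k)%nat y))) j) with
    (sum1 (fun t => (-1)^(t+1) * (d (j+t)%nat y * d (j-t)%nat y)) j).
  field. apply sum1_ext; intros. rewrite pow_add. ring.
Qed.

Lemma analysis_part (l : nat) (L : R) (d : nat -> R -> R) :
  0 < L -> Ck_on (2 * l + 1) L d ->
  sum1 (fun j => (-1) ^ (j + 1) * ip L (d (2 * j + 1)%nat) (d 0%nat)) l =
  sum1 (Phi (fun i => d i L)) l - sum1 (Phi (fun i => d i 0)) l.
Proof.
  intros HL [Hc Hd].
  assert (Hcc : forall i x, (i <= 2*l+1)%nat -> continuity_pt (fun y => d i (clamp L y)) x).
  { intros. apply cont_on_clamp; auto; lra. }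
  rewrite <- sum1_minus. apply sum1_ext. intros j Hj.
  rewrite <- !Gfun_Phi, <- Rmult_minus_distr_l. f_equal.
  unfold ip. apply ftc; auto.
  - intros x. apply (continuity_pt_mult (fun y => d (2*j+1)%nat (clamp L y)) (fun y => d 0%nat (clamp L y)));
      apply Hcc; lia.
  - intros x. apply (Gfun_cont d L (2*l+1)); auto; try lia.
  - intros x Hx. apply (Gfun_deriv d L (2*l+1)); auto; lia.
Qed.

Open Scope bool_scope.

Lemma div2_bounds (e:nat) : (2 * (e/2) <= e <= 2*(e/2)+1)%nat.
Proof. pose proof (Nat.div_mod_eq e 2). pose proof (Nat.mod_upper_bound e 2). lia. Qed.

Lemma sum1_le f g n : (forall k, (1 <= k <= n)%nat -> f k <= g k) -> sum1 f n <= sum1 g n.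
Proof. induction n; simpl; intros H; [lra|]. apply Rplus_le_compat. apply IHn; intros; apply H; lia. apply H; lia. Qed.
Lemma sum1_nonneg f n : (forall k, (1 <= k <= n)%nat -> 0 <= f k) -> 0 <= sum1 f n.
Proof. intros H. replace 0 with (sum1 (fun _ => 0) n). apply sum1_le; auto.
  clear H; induction n; simpl; auto; rewrite IHn; ring. Qed.
Lemma sum1_zero n : sum1 (fun _ => 0) n = 0.
Proof. induction n; simpl; auto; rewrite IHn; ring. Qed.
Lemma sum1_swap (f : nat -> nat -> R) n m :
  sum1 (fun j => sum1 (fun t => f j t) n) m = sum1 (fun t => sum1 (fun j => f j t) m) n.
Proof.
  induction m; simpl. rewrite sum1_zero; auto.
  rewrite IHm, <- sum1_plus. reflexivity.
Qed.
Lemma sum1_range f j n : (j <= n)%nat -> sum1 f j = sum1 (fun t => if (t <=? j)%nat then f t else 0) n.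
Proof.
  intros H. induction n.
  - assert (j = 0)%nat by lia; subst; reflexivity.
  - destruct (Nat.eq_dec j (S n)) as [->|Hne].
    + cbn [sum1]. rewrite Nat.leb_refl. f_equal.
      apply sum1_ext. intros k Hk. destruct (Nat.leb_spec k (S n)); auto; lia.
    + cbn [sum1]. rewrite IHn by lia. destruct (Nat.leb_spec (S n) j); [lia|simpl; ring].
Qed.
Lemma sum_delta (f : nat -> R) s n :
  sum1 (fun t => if (t =? s)%nat then f t else 0) n =
  if ((1 <=? s) && (s <=? n))%nat then f s else 0.
Proof.
  induction n; cbn [sum1].
  - destruct (Nat.leb_spec 1 s); destruct (Nat.leb_spec s 0); simpl; auto; lia.
  - rewrite IHn. destruct (Nat.eqb_spec (S n) s).
    + subst. destruct (Nat.leb_spec (S n) n); [lia|]. rewrite Nat.leb_refl. simpl. ring.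
    + destruct (Nat.leb_spec 1 s); destruct (Nat.leb_spec s n); destruct (Nat.leb_spec s (S n)); simpl;
      try ring; lia.
Qed.
Lemma sum_ind_le (P : nat -> bool) n a b v : 0 <= v ->
  (forall j, (1 <= j <= n)%nat -> P j = true -> (a <= j <= b)%nat) ->
  sum1 (fun j => if P j then v else 0) n <= v * INR (b + 1 - a).
Proof.
  intros Hv H.
  assert (G : forall n', (n' <= n)%nat -> sum1 (fun j => if P j then v else 0) n' <= v * INR (Nat.min n' b + 1 - a)).
  { induction n'; intros Hn; cbn [sum1].
    - apply Rmult_le_pos; auto; apply pos_INR.
    - destruct (P (S n')) eqn:E.
      + specialize (H (S n') ltac:(lia) E).
        eapply Rle_trans. apply Rplus_le_compat_r. apply IHn'; lia.
        replace (Nat.min (S n') b + 1 - a)%nat with (S (Nat.min n' b + 1 - a)) by lia.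
        rewrite S_INR. lra.
      + eapply Rle_trans. apply Rplus_le_compat_r. apply IHn'; lia.
        rewrite Rplus_0_r. apply Rmult_le_compat_l; auto. apply le_INR. lia. }
  eapply Rle_trans. apply G; auto. apply Rmult_le_compat_l; auto. apply le_INR; lia.
Qed.
Lemma term_le_sum f n k : (forall i, (1 <= i <= n)%nat -> 0 <= f i) -> (1 <= k <= n)%nat ->
  f k <= sum1 f n.
Proof.
  induction n; intros H Hk; [lia|]. simpl. destruct (Nat.eq_dec k (S n)) as [->|Hne].
  - assert (0 <= sum1 f n) by (apply sum1_nonneg; intros; apply H; lia). lra.
  - assert (0 <= f (S n)) by (apply H; lia). assert (f k <= sum1 f n) by (apply IHn; intros; try apply H; lia). lra.
Qed.
Lemma sum_shift (g : nat -> R) a N n : (a + N <= n)%nat ->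
  sum1 (fun j => if ((a <? j) && (j <=? a + N))%nat then g (j - a)%nat else 0) n = sum1 g N.
Proof.
  intros H.
  assert (G1 : forall n', (n' <= a + N)%nat ->
    sum1 (fun j => if ((a <? j) && (j <=? a + N))%nat then g (j - a)%nat else 0) n' = sum1 g (n' - a)).
  { induction n'; intros Hn. reflexivity. cbn [sum1]. rewrite IHn' by lia.
    destruct (Nat.ltb_spec a (S n')); destruct (Nat.leb_spec (S n') (a+N)); simpl andb; cbv iota; try lia.
    - replace (S n' - a)%nat with (S (n' - a)) by lia. reflexivity.
    - replace (S n' - a)%nat with 0%nat by lia. replace (n' - a)%nat with 0%nat by lia. simpl; ring. }
  assert (G2 : forall k, (a + N + k <= n)%nat ->
    sum1 (fun j => if ((a <? j) && (j <=? a + N))%nat then g (j - a)%nat else 0) (a + N + k) = sum1 g N).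
  { induction k; intros Hk. rewrite Nat.add_0_r, G1 by lia. f_equal; lia.
    replace (a + N + S k)%nat with (S (a + N + k)) by lia. cbn [sum1]. rewrite IHk by lia.
    destruct (Nat.ltb_spec a (S (a+N+k))); destruct (Nat.leb_spec (S (a+N+k)) (a+N)); simpl andb; cbv iota; try lia. ring. }
  replace n with (a + N + (n - (a+N)))%nat by lia. apply G2. lia.
Qed.

Lemma dcount (F : nat -> nat -> R) (sg : nat -> nat) (P : nat -> bool) n m a b v : 0 <= v ->
  (forall j t, (1 <= j <= n)%nat -> (1 <= t <= m)%nat ->
     F j t <= if ((t =? sg j) && P j)%nat then v else 0) ->
  (forall j, (1 <= j <= n)%nat -> P j = true -> (a <= j <= b)%nat) ->
  sum1 (fun j => sum1 (fun t => F j t) m) n <= v * INR (b + 1 - a).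
Proof.
  intros Hv HF HP. eapply Rle_trans. 2: apply (sum_ind_le P n a b v); auto.
  apply sum1_le. intros j Hj.
  eapply Rle_trans. apply sum1_le. intros t Ht. apply HF; auto.
  rewrite (sum1_ext _ (fun t => if (t =? sg j)%nat then (if P j then v else 0) else 0)).
  rewrite sum_delta. destruct (_ && _)%bool; [lra| destruct (P j); lra].
  intros t Ht. destruct (t =? sg j)%nat; destruct (P j); simpl; auto.
Qed.

Close Scope bool_scope.

Open Scope bool_scope.

Definition indb (b : bool) : R := if b then 1 else 0.
Definition del (i p : nat) : R := indb (i =? p)%nat.
Definition tau (x : nat -> R) (j t : nat) : R := (-1)^(t+1) * (x (j+t)%nat * x (j-t)%nat).
Definition w1 (l : nat) (mu : R) (p : nat) : R := if (p =? l)%nat then / (2*mu) else /2.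
Definition w2 (l : nat) (mu : R) (p : nat) : R := /2 + indb (p =? l)%nat * ((mu - 1)/2).
Definition gD (l j t : nat) : bool := (j =? l)%nat && (t <? l)%nat.
Definition g1 (l j t : nat) : bool := (j <? l)%nat && (t <? j)%nat && (j + t <=? l)%nat.
Definition gA (l j t : nat) : bool := (j <? l)%nat && (t <? j)%nat && (l <? j + t)%nat.
Definition aD l (c : nat -> R) s j t := indb (gD l j t) * (s * (-1)^(t+1) * c t).
Definition a1 l mu j t := - indb (g1 l j t) * w1 l mu (j+t)%nat.
Definition a2 l mu j t := - indb (g1 l j t) * w2 l mu (j+t)%nat.
Definition a3 l (c K : nat -> R) j t := - indb (gA l j t) * (Rabs (c (j+t-l)%nat) / (2 * K (j-t)%nat)).
Definition a4 l (c K : nat -> R) j t := - indb (gA l j t) * (Rabs (c (j+t-l)%nat) * K (j-t)%nat / 2).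
Definition om l c K mu s j t i :=
  aD l c s j t * del i (l-t) + a1 l mu j t * del i (j+t) + a2 l mu j t * del i (j-t)
  + a3 l c K j t * del i (2*l-(j+t)) + a4 l c K j t * del i (j-t).

Lemma sd_eval (y : nat -> R) p n :
  sum1 (fun i => del i p * y i) n = if ((1 <=? p) && (p <=? n))%nat then y p else 0.
Proof.
  rewrite <- sum_delta. apply sum1_ext. intros k _. unfold del, indb.
  destruct (Nat.eqb_spec k p); [subst; ring| ring].
Qed.

Lemma sum_om l c K mu s j t (y : nat -> R) :
  sum1 (fun i => om l c K mu s j t i * y i) l =
  aD l c s j t * sum1 (fun i => del i (l-t) * y i) l
  + a1 l mu j t * sum1 (fun i => del i (j+t) * y i) l
  + a2 l mu j t * sum1 (fun i => del i (j-t) * y i) l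
  + a3 l c K j t * sum1 (fun i => del i (2*l-(j+t)) * y i) l
  + a4 l c K j t * sum1 (fun i => del i (j-t) * y i) l.
Proof.
  rewrite <- !sum1_scal, <- !sum1_plus. apply sum1_ext. intros; unfold om; ring.
Qed.

Lemma amgm a b w : 0 < w -> Rabs (a * b) <= a * a / (2 * w) + w * (b * b) / 2.
Proof.
  intros Hw. rewrite Rabs_mult.
  assert (0 <= (Rabs a - w * Rabs b) * (Rabs a - w * Rabs b)) by apply Rle_0_sqr.
  assert (Rabs a * Rabs a = a * a) by (rewrite <- Rabs_mult; apply Rabs_pos_eq; nra).
  assert (Rabs b * Rabs b = b * b) by (rewrite <- Rabs_mult; apply Rabs_pos_eq; nra).
  apply Rmult_le_reg_l with (2 * w). lra.
  field_simplify. 2: lra. nra.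
Qed.

Ltac bd := repeat match goal with
 | |- context [Nat.eqb ?a ?b] => destruct (Nat.eqb_spec a b)
 | |- context [Nat.ltb ?a ?b] => destruct (Nat.ltb_spec a b)
 | |- context [Nat.leb ?a ?b] => destruct (Nat.leb_spec a b)
 end; simpl andb in *; cbv iota in *.

Lemma sd_in (y : nat -> R) p n : (1 <= p <= n)%nat -> sum1 (fun i => del i p * y i) n = y p.
Proof.
  intros H. rewrite sd_eval. destruct (Nat.leb_spec 1 p); destruct (Nat.leb_spec p n); simpl; auto; lia.
Qed.

Ltac gv := unfold gD, g1, gA; bd; try reflexivity; lia.
Ltac clean := unfold indb; cbv iota;
  rewrite ?Ropp_0, ?Rmult_0_l, ?Rmult_0_r, ?Rplus_0_r, ?Rplus_0_l, ?Rmult_1_l.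

Lemma pointwise l c K mu s (x : nat -> R) j t :
  (1 <= l)%nat -> x 0%nat = 0 ->
  (forall m, (1 <= m <= l - 1)%nat -> x (l+m)%nat = c m * x (l-m)%nat) ->
  (forall q, 0 <= K q) ->
  (forall j t, (j < l)%nat -> (t < j)%nat -> (l < j + t)%nat -> Rabs (c (j+t-l)%nat) <= K (j-t)%nat) ->
  1 <= mu -> s * s = 1 ->
  (1 <= j <= l)%nat -> (1 <= t <= l)%nat ->
  sum1 (fun i => om l c K mu s j t i * (x i * x i)) l <= (if (t <=? j)%nat then s * tau x j t else 0).
Proof.
  intros Hl Hx0 Hc HK HKc Hmu Hs Hj Ht.
  rewrite sum_om.
  assert (Habs : forall r, - Rabs r <= s * r).
  { intros r. assert (s = 1 \/ s = -1) as [-> | ->].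
    { assert ((s-1)*(s+1) = 0) by nra. apply Rmult_integral in H as [H|H]; [left|right]; lra. }
    - pose proof (Rle_abs (-r)); rewrite Rabs_Ropp in H; lra.
    - pose proof (Rle_abs r); lra. }
  unfold aD, a1, a2, a3, a4, tau.
  destruct (Nat.eqb_spec j l) as [->|Hjl].
  -
    destruct (Nat.ltb_spec t l) as [Htl|Htl].
    + replace (gD l l t) with true by (symmetry; gv). replace (g1 l l t) with false by (symmetry; gv).
      replace (gA l l t) with false by (symmetry; gv). clean.
      destruct (Nat.leb_spec t l); [|lia]. cbv iota.
      rewrite sd_in by lia.
      rewrite Hc by lia. replace (l - (l - t))%nat with t by lia. lra.
    + assert (t = l) by lia. subst t.
      replace (gD l l l) with false by (symmetry; gv). replace (g1 l l l) with false by (symmetry; gv).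
      replace (gA l l l) with false by (symmetry; gv). clean.
      rewrite Nat.leb_refl. cbv iota. rewrite Nat.sub_diag, Hx0. lra.
  - destruct (Nat.ltb_spec t j) as [Htj|Htj].
    + destruct (Nat.leb_spec t j); [|lia]. cbv iota.
      destruct (Nat.leb_spec (j+t) l) as [Hjt|Hjt].
      *
        replace (gD l j t) with false by (symmetry; gv). replace (g1 l j t) with true by (symmetry; gv).
        replace (gA l j t) with false by (symmetry; gv). clean.
        rewrite !sd_in by lia.
        eapply Rle_trans; [|apply Habs].
        rewrite Rabs_mult, pow_1_abs, Rmult_1_l.
        unfold w1, w2, indb; destruct (Nat.eqb_spec (j+t) l).
        -- eapply Rle_trans. 2: apply Ropp_le_contravar; apply (amgm _ _ mu); lra.
           right; field; lra.
        -- eapply Rle_trans. 2: apply Ropp_le_contravar; apply (amgm _ _ 1); lra.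
           right; field.
      *
        replace (gD l j t) with false by (symmetry; gv). replace (g1 l j t) with false by (symmetry; gv).
        replace (gA l j t) with true by (symmetry; gv). clean.
        rewrite !sd_in by lia.
        set (m := (j + t - l)%nat).
        assert (Hxp : x (j+t)%nat = c m * x (2*l-(j+t))%nat).
        { replace (j+t)%nat with (l+m)%nat by (unfold m; lia). rewrite Hc by (unfold m; lia).
          f_equal. f_equal. unfold m; lia. }
        rewrite Hxp. specialize (HKc j t ltac:(lia) ltac:(lia) ltac:(lia)). fold m in HKc.
        set (Kq := K (j-t)%nat) in *. set (y := x (2*l-(j+t))%nat). set (z := x (j-t)%nat).
        eapply Rle_trans; [|apply Habs].
        destruct (Req_dec Kq 0) as [HK0|HK0].
        { assert (Hcm : c m = 0).
          { destruct (Req_dec (c m) 0) as [E|E]; auto. exfalso.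
            pose proof (Rabs_pos_lt _ E). lra. }
          rewrite Hcm, HK0. replace ((-1)^(t+1) * (0*y*z)) with 0 by ring. rewrite !Rabs_R0. unfold Rdiv. ring_simplify. lra. }
        assert (Hpos : 0 < Kq) by (specialize (HK (j-t)%nat); fold Kq in HK; lra).
        replace ((-1) ^ (t + 1) * (c m * y * z)) with (c m * ((-1)^(t+1) * (y * z))) by ring.
        rewrite Rabs_mult, (Rabs_mult ((-1)^(t+1))), pow_1_abs, Rmult_1_l.
        pose proof (Rabs_pos (c m)) as Hcp.
        eapply Rle_trans. 2: apply Ropp_le_contravar, Rmult_le_compat_l; [exact Hcp|apply (amgm y z Kq Hpos)].
        right; field; lra.
    +
      replace (gD l j t) with false by (symmetry; gv). replace (g1 l j t) with false by (symmetry; gv).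
      replace (gA l j t) with false by (symmetry; gv). clean.
      destruct (Nat.leb_spec t j) as [Htj'|Htj']; cbv iota.
      * assert (t = j) by lia. subst t. rewrite Nat.sub_diag, Hx0. rewrite Rmult_0_r, Rmult_0_r. lra.
      * lra.
Qed.

Close Scope bool_scope.

Open Scope bool_scope.

Definition W l c K mu s i := sum1 (fun j => sum1 (fun t => om l c K mu s j t i) l) l.

Lemma F_decomp (x : nat -> R) l :
  sum1 (Phi x) l = - sum1 (fun i => x i * x i) l / 2 + sum1 (fun j => sum1 (tau x j) j) l.
Proof.
  unfold Phi. rewrite sum1_plus. f_equal.
  transitivity (-/2 * sum1 (fun i => x i * x i) l).
  rewrite <- sum1_scal; apply sum1_ext; intros; field. field.
Qed.

Lemma sum_bound l c K mu s (x : nat -> R) :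
  (1 <= l)%nat -> x 0%nat = 0 ->
  (forall m, (1 <= m <= l - 1)%nat -> x (l+m)%nat = c m * x (l-m)%nat) ->
  (forall q, 0 <= K q) ->
  (forall j t, (j < l)%nat -> (t < j)%nat -> (l < j + t)%nat -> Rabs (c (j+t-l)%nat) <= K (j-t)%nat) ->
  1 <= mu -> s * s = 1 ->
  sum1 (fun i => (x i * x i) * W l c K mu s i) l <= s * sum1 (fun j => sum1 (tau x j) j) l.
Proof.
  intros Hl Hx0 Hc HK HKc Hmu Hs.
  rewrite <- sum1_scal.
  rewrite (sum1_ext (fun j => s * sum1 (tau x j) j) (fun j => sum1 (fun t => if (t <=? j)%nat then s * tau x j t else 0) l)).
  2:{ intros j Hj. rewrite <- sum1_scal. rewrite (sum1_range _ j l) by lia. apply sum1_ext; intros t Ht.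
      destruct (t <=? j)%nat; ring. }
  eapply Rle_trans. 2:{ apply sum1_le; intros j Hj. apply sum1_le; intros t Ht.
    apply (pointwise l c K mu s x j t); auto. }
  rewrite (sum1_ext (fun j => sum1 (fun t => sum1 (fun i => om l c K mu s j t i * (x i * x i)) l) l) (fun j => sum1 (fun i => sum1 (fun t => om l c K mu s j t i * (x i * x i)) l) l)).
  2:{ intros j Hj. apply sum1_swap. }
  rewrite sum1_swap. right. apply sum1_ext. intros i Hi. unfold W.
  rewrite <- sum1_scal. apply sum1_ext. intros j Hj. rewrite <- sum1_scal. apply sum1_ext. intros; ring.
Qed.

Close Scope bool_scope.

Open Scope bool_scope.

Definition Dsum (f : nat -> nat -> R) (l : nat) := sum1 (fun j => sum1 (fun t => f j t) l) l.

Lemma Dsum_plus f g l : Dsum (fun j t => f j t + g j t) l = Dsum f l + Dsum g l.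
Proof. unfold Dsum. rewrite <- sum1_plus. apply sum1_ext; intros. apply sum1_plus. Qed.
Lemma Dsum_scal a f l : Dsum (fun j t => a * f j t) l = a * Dsum f l.
Proof. unfold Dsum. rewrite <- sum1_scal. apply sum1_ext; intros. apply sum1_scal. Qed.
Lemma Dsum_ext f g l : (forall j t, (1 <= j <= l)%nat -> (1 <= t <= l)%nat -> f j t = g j t) -> Dsum f l = Dsum g l.
Proof. intros H; unfold Dsum; apply sum1_ext; intros; apply sum1_ext; intros; auto. Qed.
Lemma Dsum_le f g l : (forall j t, (1 <= j <= l)%nat -> (1 <= t <= l)%nat -> f j t <= g j t) -> Dsum f l <= Dsum g l.
Proof. intros H; unfold Dsum; apply sum1_le; intros; apply sum1_le; intros; auto. Qed.
Lemma Dsum_zero f l : (forall j t, (1 <= j <= l)%nat -> (1 <= t <= l)%nat -> f j t = 0) -> Dsum f l = 0.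
Proof. intros H. rewrite (Dsum_ext _ (fun _ _ => 0 * 0)) by (intros; rewrite H; auto; ring).
  rewrite Dsum_scal; ring. Qed.

Lemma W_split l c K mu s i : W l c K mu s i =
  Dsum (fun j t => aD l c s j t * del i (l-t)) l + Dsum (fun j t => a1 l mu j t * del i (j+t)) l
  + Dsum (fun j t => a2 l mu j t * del i (j-t)) l + Dsum (fun j t => a3 l c K j t * del i (2*l-(j+t))) l
  + Dsum (fun j t => a4 l c K j t * del i (j-t)) l.
Proof. unfold W. rewrite <- !Dsum_plus. reflexivity. Qed.

Lemma INR_half n m : (2 * n <= m)%nat -> INR n <= INR m / 2.
Proof. intros H. apply le_INR in H. rewrite mult_INR in H. simpl in H. lra. Qed.



Lemma PD l c s i : (1 <= i <= l - 1)%nat ->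
  Dsum (fun j t => aD l c s j t * del i (l-t)) l = s * (-1)^(l-i+1) * c (l-i)%nat.
Proof.
  intros Hi. unfold Dsum.
  rewrite (sum1_ext _ (fun j => if (j =? l)%nat then s * (-1)^(l-i+1) * c (l-i)%nat else 0)).
  - rewrite sum_delta. destruct (Nat.leb_spec 1 l); destruct (Nat.leb_spec l l); simpl; auto; lia.
  - intros j Hj.
    rewrite (sum1_ext _ (fun t => if (t =? l - i)%nat then (if (j =? l)%nat then s * (-1)^(t+1) * c t else 0) else 0)).
    + rewrite sum_delta. destruct (Nat.leb_spec 1 (l-i)); destruct (Nat.leb_spec (l-i) l); simpl; try lia.
      reflexivity.
    + intros t Ht. unfold aD, gD, del, indb. bd; try lia; try ring.
Qed.

Lemma P1a l mu i : (1 <= i <= l)%nat -> 1 <= mu ->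
  Dsum (fun j t => - (a1 l mu j t * del i (j+t))) l <= w1 l mu i * ((INR i - 1) / 2).
Proof.
  intros Hi Hmu.
  assert (Hw : 0 <= w1 l mu i) by (unfold w1; destruct (_ =? _)%nat; apply Rlt_le, Rinv_0_lt_compat; lra).
  eapply Rle_trans.
  - apply (dcount _ (fun j => i - j)%nat (fun j => (i/2 + 1 <=? j)%nat && (j <=? i - 1)%nat) l l (i/2+1) (i-1) (w1 l mu i)); auto.
    + intros j t Hj Ht. unfold a1, g1, del, indb. pose proof (div2_bounds i).
      destruct (Nat.eqb_spec i (j+t)) as [E|E].
      * subst i. bd; try lia; try (ring_simplify; lra).
      * bd; try lia; ring_simplify; lra.
    + intros j Hj HP. apply andb_prop in HP as [H1 H2]. apply Nat.leb_le in H1, H2. lia.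
  - apply Rmult_le_compat_l; auto. pose proof (div2_bounds i).
    replace (INR i - 1) with (INR (i-1)) by (rewrite minus_INR by lia; reflexivity).
    apply INR_half. lia.
Qed.

Lemma P1b l mu i : (1 <= i <= l)%nat -> 1 <= mu ->
  Dsum (fun j t => - (a2 l mu j t * del i (j-t))) l <= / 2 * ((INR l - INR i) / 2) + (mu - 1) / 2.
Proof.
  intros Hi Hmu.
  rewrite (Dsum_ext _ (fun j t => indb (g1 l j t) * / 2 * del i (j-t) +
      indb (g1 l j t) * indb (j + t =? l)%nat * ((mu-1)/2) * del i (j-t))).
  2:{ intros; unfold a2, w2; ring. }
  rewrite Dsum_plus. apply Rplus_le_compat.
  - eapply Rle_trans.
    + apply (dcount _ (fun j => j - i)%nat (fun j => (i + 1 <=? j)%nat && (2 * j <=? l + i)%nat) l l (i+1) ((l+i)/2) (/2)).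
      lra.
      * intros j t Hj Ht. unfold g1, del, indb. pose proof (div2_bounds (l+i)).
        destruct (Nat.eqb_spec i (j-t)) as [E|E].
        -- bd; try lia; lra.
        -- bd; try lia; lra.
      * intros j Hj HP. apply andb_prop in HP as [H1 H2]. apply Nat.leb_le in H1, H2.
        pose proof (div2_bounds (l+i)). lia.
    + apply Rmult_le_compat_l; [lra|]. pose proof (div2_bounds (l+i)).
      rewrite <- minus_INR by lia. apply INR_half. lia.
  - eapply Rle_trans.
    + apply (dcount _ (fun j => j - i)%nat (fun j => (2 * j =? l + i)%nat) l l ((l+i)/2) ((l+i)/2) ((mu-1)/2)).
      lra.
      * intros j t Hj Ht. unfold g1, del, indb. pose proof (div2_bounds (l+i)).
        destruct (Nat.eqb_spec i (j-t)) as [E|E].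
        -- bd; try lia; lra.
        -- bd; try lia; lra.
      * intros j Hj HP. apply Nat.eqb_eq in HP. pose proof (div2_bounds (l+i)). lia.
    + replace ((l + i) / 2 + 1 - (l + i) / 2)%nat with 1%nat by lia. simpl. lra.
Qed.

Lemma PA l c K i : (1 <= i <= l)%nat -> (forall q, 0 <= K q) ->
  (forall j t, (j < l)%nat -> (t < j)%nat -> (l < j + t)%nat -> Rabs (c (j+t-l)%nat) <= K (j-t)%nat) ->
  Dsum (fun j t => - (a3 l c K j t * del i (2*l-(j+t)))) l <= / 2 * ((INR i - 1) / 2).
Proof.
  intros Hi HK HKc.
  eapply Rle_trans.
  - apply (dcount _ (fun j => 2*l - i - j)%nat (fun j => ((2*l-i)/2 + 1 <=? j)%nat && (j <=? l - 1)%nat) l l ((2*l-i)/2+1) (l-1) (/2)).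
    lra.
    + intros j t Hj Ht. unfold a3, gA, del, indb. pose proof (div2_bounds (2*l-i)).
      assert (Hq : forall j t, (j < l)%nat -> (t < j)%nat -> (l < j + t)%nat ->
                Rabs (c (j+t-l)%nat) / (2 * K (j-t)%nat) <= /2).
      { intros j' t' H1 H2 H3. specialize (HKc j' t' H1 H2 H3). pose proof (HK (j'-t')%nat).
        pose proof (Rabs_pos (c (j' + t' - l)%nat)).
        destruct (Req_dec (K (j'-t')%nat) 0) as [E|E].
        - rewrite E, Rmult_0_r. unfold Rdiv. rewrite Rinv_0. lra.
        - apply (Rmult_le_reg_r (2 * K (j'-t')%nat)). lra. unfold Rdiv.
          rewrite Rmult_assoc, Rinv_l by lra. lra. }
      destruct (Nat.eqb_spec i (2*l-(j+t))) as [E|E].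
      * bd; try lia; try (ring_simplify; lra).
        ring_simplify. apply Hq; lia.
      * bd; try lia; ring_simplify; try lra.
    + intros j Hj HP. apply andb_prop in HP as [H1 H2]. apply Nat.leb_le in H1, H2. lia.
  - apply Rmult_le_compat_l; [lra|]. pose proof (div2_bounds (2*l-i)).
    replace (INR i - 1) with (INR (i-1)) by (rewrite minus_INR by lia; reflexivity).
    apply INR_half. lia.
Qed.

Lemma PB l c K i :
  Dsum (fun j t => - (a4 l c K j t * del i (j-t))) l =
  K i / 2 * Dsum (fun j t => indb (gA l j t) * Rabs (c (j+t-l)%nat) * del i (j-t)) l.
Proof.
  rewrite <- Dsum_scal. apply Dsum_ext. intros j t _ _. unfold a4, del, indb.
  destruct (Nat.eqb_spec i (j-t)) as [E|E]; cbv iota; [rewrite E|]; field.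
Qed.

Lemma Pzero l c K mu s : (1 <= l)%nat ->
  Dsum (fun j t => aD l c s j t * del l (l-t)) l = 0 /\
  Dsum (fun j t => a2 l mu j t * del l (j-t)) l = 0 /\
  Dsum (fun j t => a3 l c K j t * del l (2*l-(j+t))) l = 0 /\
  Dsum (fun j t => a4 l c K j t * del l (j-t)) l = 0.
Proof.
  intros Hl. repeat split; apply Dsum_zero; intros j t Hj Ht.
  - unfold aD, gD, del, indb. bd; try lia; ring.
  - unfold a2, g1, del, indb. bd; try lia; ring.
  - unfold a3, gA, del, indb. bd; try lia; ring.
  - unfold a4, gA, del, indb. bd; try lia; ring.
Qed.

Close Scope bool_scope.

Open Scope bool_scope.

Lemma Dsum_opp f l : Dsum f l = - Dsum (fun j t => - f j t) l.
Proof. rewrite (Dsum_ext (fun j t => - f j t) (fun j t => -1 * f j t)) by (intros; ring).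
  rewrite Dsum_scal. ring. Qed.

Lemma W_mid l c K mu s i : (1 <= i <= l - 1)%nat -> 1 <= mu ->
  (forall q, 0 <= K q) ->
  (forall j t, (j < l)%nat -> (t < j)%nat -> (l < j + t)%nat -> Rabs (c (j+t-l)%nat) <= K (j-t)%nat) ->
  Dsum (fun j t => indb (gA l j t) * Rabs (c (j+t-l)%nat) * del i (j-t)) l <= K i ->
  s * (-1)^(l-i+1) * c (l-i)%nat - /2*((INR i - 1)/2) - (/2*((INR l - INR i)/2) + (mu-1)/2)
    - /2*((INR i - 1)/2) - K i * K i / 2 <= W l c K mu s i.
Proof.
  intros Hi Hmu HK HKc HS.
  rewrite W_split, PD by lia.
  rewrite (Dsum_opp (fun j t => a1 l mu j t * del i (j+t))).
  rewrite (Dsum_opp (fun j t => a2 l mu j t * del i (j-t))).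
  rewrite (Dsum_opp (fun j t => a3 l c K j t * del i (2*l-(j+t)))).
  rewrite (Dsum_opp (fun j t => a4 l c K j t * del i (j-t))).
  pose proof (P1a l mu i ltac:(lia) Hmu) as H1.
  replace (w1 l mu i) with (/2) in H1 by (unfold w1; destruct (Nat.eqb_spec i l); [lia|auto]).
  pose proof (P1b l mu i ltac:(lia) Hmu) as H2.
  pose proof (PA l c K i ltac:(lia) HK HKc) as H3.
  rewrite PB. pose proof (HK i).
  assert (K i / 2 * Dsum (fun j t => indb (gA l j t) * Rabs (c (j+t-l)%nat) * del i (j-t)) l <= K i * K i / 2).
  { set (S := Dsum _ l) in *. assert (0 <= K i * (K i - S)) by (apply Rmult_le_pos; lra). lra. }
  lra.
Qed.

Lemma W_top l c K mu s : (1 <= l)%nat -> 1 <= mu ->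
  - (/ (2*mu)) * ((INR l - 1)/2) <= W l c K mu s l.
Proof.
  intros Hl Hmu.
  rewrite W_split. destruct (Pzero l c K mu s Hl) as [Z1 [Z2 [Z3 Z4]]].
  rewrite Z1, Z2, Z3, Z4.
  rewrite (Dsum_opp (fun j t => a1 l mu j t * del l (j+t))).
  pose proof (P1a l mu l ltac:(lia) Hmu) as H1.
  replace (w1 l mu l) with (/(2*mu)) in H1 by (unfold w1; rewrite Nat.eqb_refl; auto).
  lra.
Qed.

Lemma endpoint_bound l c K mu s D (x : nat -> R) :
  (1 <= l)%nat -> x 0%nat = 0 ->
  (forall m, (1 <= m <= l - 1)%nat -> x (l+m)%nat = c m * x (l-m)%nat) ->
  (forall q, 0 <= K q) ->
  (forall j t, (j < l)%nat -> (t < j)%nat -> (l < j + t)%nat -> Rabs (c (j+t-l)%nat) <= K (j-t)%nat) ->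
  (forall i, (1 <= i <= l - 1)%nat ->
     Dsum (fun j t => indb (gA l j t) * Rabs (c (j+t-l)%nat) * del i (j-t)) l <= K i) ->
  1 <= mu -> s * s = 1 ->
  (forall i, (1 <= i <= l - 1)%nat -> s * (-1)^(l-i+1) * c (l-i)%nat > D + K i * K i / 2) ->
  (forall i, (1 <= i <= l - 1)%nat ->
     D - /2*((INR i - 1)/2) - (/2*((INR l - INR i)/2) + (mu-1)/2) - /2*((INR i - 1)/2) - s / 2 >= 1/4) ->
  (- s / 2 - (/ (2*mu)) * ((INR l - 1)/2) >= 1/4 \/ x l = 0) ->
  s * sum1 (Phi x) l >= 1/4 * (sum1 (fun i => x i * x i) (l-1) + (if Rle_dec s 0 then x l * x l else 0)).
Proof.
  intros Hl Hx0 Hc HK HKc HS Hmu Hs Hdiag Hcoef Htop.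
  rewrite F_decomp.
  pose proof (sum_bound l c K mu s x Hl Hx0 Hc HK HKc Hmu Hs) as SB.
  assert (E : s * (- sum1 (fun i => x i * x i) l / 2 + sum1 (fun j => sum1 (tau x j) j) l) =
    sum1 (fun i => - s / 2 * (x i * x i)) l + s * sum1 (fun j => sum1 (tau x j) j) l).
  { rewrite sum1_scal. field. }
  rewrite E. clear E.
  eapply Rge_trans. apply Rle_ge, Rplus_le_compat_l, SB.
  rewrite <- sum1_plus.
  replace l with (S (l-1)) at 1 by lia. cbn [sum1]. replace (S (l-1)) with l by lia.
  assert (HS1 : sum1 (fun i => 1/4 * (x i * x i)) (l-1) <=
     sum1 (fun k => - s / 2 * (x k * x k) + x k * x k * W l c K mu s k) (l-1)).
  { apply sum1_le. intros i Hi.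
    pose proof (W_mid l c K mu s i Hi Hmu HK HKc (HS i Hi)).
    specialize (Hdiag i Hi). specialize (Hcoef i Hi).
    assert (0 <= x i * x i) by apply Rle_0_sqr.
    assert (1/4 <= - s/2 + W l c K mu s i).
    { assert (s = 1 \/ s = -1) as [E|E].
      { assert ((s-1)*(s+1) = 0) by nra. apply Rmult_integral in H1 as [H1|H1]; [left|right]; lra. }
      all: rewrite E in *; lra. }
    nra. }
  rewrite Rmult_plus_distr_l, <- sum1_scal.
  assert (s = 1 \/ s = -1) as [E|E].
  { assert ((s-1)*(s+1) = 0) by nra. apply Rmult_integral in H as [H|H]; [left|right]; lra. }
  - destruct (Rle_dec s 0); [lra|]. rewrite Rmult_0_r, Rplus_0_r.
    destruct Htop as [Ht|Ht].
    + pose proof (W_top l c K mu s Hl Hmu). assert (0 <= x l * x l) by apply Rle_0_sqr.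
      rewrite E in *. nra.
    + rewrite Ht. lra.
  - destruct (Rle_dec s 0); [|lra].
    destruct Htop as [Ht|Ht].
    + pose proof (W_top l c K mu s Hl Hmu). assert (0 <= x l * x l) by apply Rle_0_sqr.
      rewrite E in *. nra.
    + rewrite Ht. lra.
Qed.

Close Scope bool_scope.

Open Scope bool_scope.

Definition Kf (c : nat -> R) (l q : nat) : R :=
  if Nat.odd (l - q) then sum1 (fun k => Rabs (c (2*k-1)%nat)) ((l-q-1)/2)
  else sum1 (fun k => Rabs (c (2*k)%nat)) ((l-q)/2 - 1).

Lemma Kf_nonneg c l q : 0 <= Kf c l q.
Proof. unfold Kf; destruct (Nat.odd _); apply sum1_nonneg; intros; apply Rabs_pos. Qed.

Lemma Kf_c c l j t : (j < l)%nat -> (t < j)%nat -> (l < j + t)%nat ->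
  Rabs (c (j+t-l)%nat) <= Kf c l (j-t).
Proof.
  intros H1 H2 H3. unfold Kf.
  destruct (Nat.Even_or_Odd (j+t-l)) as [[p Hp]|[p Hp]].
  - replace (l - (j-t))%nat with (2*(p+l-j))%nat by lia. rewrite Nat.odd_even.
    replace (2 * (p + l - j) / 2 - 1)%nat with (p+l-j-1)%nat by (pose proof (div2_bounds (2*(p+l-j))); lia).
    rewrite Hp. apply (term_le_sum (fun k => Rabs (c (2*k)%nat))). intros; apply Rabs_pos. lia.
  - replace (l - (j-t))%nat with (2*(p+l-j)+1)%nat by lia. rewrite Nat.odd_odd.
    replace ((2 * (p + l - j) + 1 - 1) / 2)%nat with (p+l-j)%nat by (pose proof (div2_bounds (2*(p+l-j)+1-1)); lia).
    rewrite Hp. replace (2*p+1)%nat with (2*(p+1)-1)%nat by lia.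
    apply (term_le_sum (fun k => Rabs (c (2*k-1)%nat))). intros; apply Rabs_pos. lia.
Qed.

Lemma Kf_S c l i : (1 <= i <= l - 1)%nat ->
  Dsum (fun j t => indb (gA l j t) * Rabs (c (j+t-l)%nat) * del i (j-t)) l <= Kf c l i.
Proof.
  intros Hi. unfold Dsum.
  rewrite (sum1_ext _ (fun j => if (i <? j)%nat && (j <? l)%nat && (l + i <? 2*j)%nat
                                then Rabs (c (2*j-i-l)%nat) else 0)).
  2:{ intros j Hj.
      rewrite (sum1_ext _ (fun t => if (t =? j - i)%nat then
          (if (i <? j)%nat && (j <? l)%nat && (l + i <? 2*j)%nat then Rabs (c (2*j-i-l)%nat) else 0) else 0)).
      - rewrite sum_delta. bd; try lia; reflexivity.
      - intros t Ht. unfold gA, del, indb.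
        destruct (Nat.eqb_spec t (j-i)) as [->|Ne].
        + replace (j + (j - i) - l)%nat with (2*j-i-l)%nat by lia. bd; try lia; ring.
        + bd; try lia; ring. }
  right. unfold Kf.
  destruct (Nat.Even_or_Odd (l-i)) as [[p Hp]|[p Hp]].
  - rewrite Hp, Nat.odd_even.
    replace (2 * p / 2 - 1)%nat with (p - 1)%nat by (pose proof (div2_bounds (2*p)); pose proof (div2_bounds (2*p+1-1)); lia).
    rewrite <- (sum_shift (fun k => Rabs (c (2*k)%nat)) (i+p) (p-1) l) by lia.
    apply sum1_ext. intros j Hj.
    bd; try lia; try reflexivity. f_equal. f_equal. lia.
  - rewrite Hp, Nat.odd_odd.
    replace ((2 * p + 1 - 1) / 2)%nat with p by (pose proof (div2_bounds (2*p)); pose proof (div2_bounds (2*p+1-1)); lia).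
    rewrite <- (sum_shift (fun k => Rabs (c (2*k-1)%nat)) (i+p) p l) by lia.
    apply sum1_ext. intros j Hj.
    bd; try lia; try reflexivity. f_equal. f_equal. lia.
Qed.

Close Scope bool_scope.

Open Scope bool_scope.

Lemma m1_even n : (-1)^(2*n) = 1.
Proof. rewrite pow_mult. replace ((-1)^2) with 1 by (simpl; ring). apply pow1. Qed.
Lemma m1_odd n : (-1)^(2*n+1) = -1.
Proof. rewrite pow_add, m1_even. simpl; ring. Qed.

Lemma diag_gen l (c : nat -> R) (bb : nat -> nat -> R) s D :
  (4 <= l)%nat ->
  (forall m, c m = bb (l+m)%nat (l-m)%nat) ->
  (s * c 1%nat > D) ->
  (- s * c 2%nat > D) ->
  (forall j, (3 <= j <= l - 1)%nat -> Nat.odd j = true ->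
     s * bb (l+j)%nat (l-j)%nat > D + 1/2 *
       (sum1 (fun m => Rabs (bb (l + 2*m - 1)%nat (l - 2*m + 1)%nat)) ((j-1)/2)) ^ 2) ->
  (forall j, (4 <= j <= l - 1)%nat -> Nat.even j = true ->
     - s * bb (l+j)%nat (l-j)%nat > D + 1/2 *
       (sum1 (fun m => Rabs (bb (l + 2*m)%nat (l - 2*m)%nat)) (j/2 - 1)) ^ 2) ->
  forall i, (1 <= i <= l - 1)%nat -> s * (-1)^(l-i+1) * c (l-i)%nat > D + Kf c l i * Kf c l i / 2.
Proof.
  intros Hl Hc H1 H2 Ho He i Hi. unfold Kf.
  destruct (Nat.Even_or_Odd (l-i)) as [[p Hp]|[p Hp]].
  - rewrite Hp, Nat.odd_even. replace (2*p+1)%nat with (2*p+1)%nat by lia. rewrite m1_odd.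
    replace (2 * p / 2 - 1)%nat with (p - 1)%nat by (pose proof (div2_bounds (2*p)); lia).
    destruct (Nat.eq_dec p 1) as [->|Hp1].
    + simpl sum1. replace (2*1)%nat with 2%nat by lia. lra.
    + specialize (He (2*p)%nat ltac:(lia) (Nat.even_even p)).
      replace (2 * p / 2 - 1)%nat with (p - 1)%nat in He by (pose proof (div2_bounds (2*p)); lia).
      rewrite (sum1_ext (fun k => Rabs (c (2*k)%nat)) (fun m => Rabs (bb (l + 2*m)%nat (l - 2*m)%nat)))
        by (intros; rewrite Hc; reflexivity).
      rewrite Hc. set (S := sum1 _ (p-1)) in *. replace (S^2) with (S*S) in He by ring. lra.
  - rewrite Hp, Nat.odd_odd. replace (2*p+1+1)%nat with (2*(p+1))%nat by lia. rewrite m1_even.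
    replace ((2 * p + 1 - 1) / 2)%nat with p by (pose proof (div2_bounds (2*p+1-1)); lia).
    destruct (Nat.eq_dec p 0) as [->|Hp0].
    + simpl sum1. replace (2*0+1)%nat with 1%nat by lia. lra.
    + specialize (Ho (2*p+1)%nat ltac:(lia) (Nat.odd_odd p)).
      replace ((2 * p + 1 - 1) / 2)%nat with p in Ho by (pose proof (div2_bounds (2*p+1-1)); lia).
      rewrite (sum1_ext (fun k => Rabs (c (2*k-1)%nat)) (fun m => Rabs (bb (l + 2*m - 1)%nat (l - 2*m + 1)%nat))).
      2:{ intros k Hk. rewrite Hc. f_equal. f_equal; lia. }
      rewrite Hc. set (S := sum1 _ p) in *. replace (S^2) with (S*S) in Ho by ring. replace (l + (2*p+1))%nat with (l + (2*p+1))%nat in * by lia. lra.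
Qed.

Close Scope bool_scope.

Open Scope bool_scope.

Lemma alg4 l a b : (4 <= l)%nat -> CoefCond l a b ->
  forall xL x0 : nat -> R, xL 0%nat = 0 -> x0 0%nat = 0 -> xL l = 0 ->
  (forall j, (1 <= j <= l - 1)%nat ->
     x0 (l + j)%nat = a (l + j)%nat (l - j)%nat * x0 (l - j)%nat /\
     xL (l + j)%nat = b (l + j)%nat (l - j)%nat * xL (l - j)%nat) ->
  sum1 (Phi xL) l - sum1 (Phi x0) l >=
    1/4 * (sum1 (fun i => xL i ^ 2 + x0 i ^ 2) (l - 1) + x0 l ^ 2).
Proof.
  intros Hl HC xL x0 HL0 H00 HLl HBC.
  destruct HC as [_ [_ C4]]. destruct (C4 Hl) as [Hb1 [Hb2 [Ha1 [Ha2 [Hodd Heven]]]]].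
  set (cb := fun m => b (l+m)%nat (l-m)%nat). set (ca := fun m => a (l+m)%nat (l-m)%nat).
  assert (HlR : 4 <= INR l) by (replace 4 with (INR 4) by (simpl; ring); apply le_INR; lia).
  assert (Hi_range : forall i, (1 <= i <= l - 1)%nat -> 1 <= INR i <= INR l - 1).
  { intros i Hi. split. replace 1 with (INR 1) by reflexivity. apply le_INR; lia.
    replace (INR l - 1) with (INR (l-1)) by (rewrite minus_INR by lia; reflexivity). apply le_INR; lia. }
  pose proof (endpoint_bound l cb (Kf cb l) 1 1 (INR l - 2) xL ltac:(lia) HL0
    (fun m Hm => proj2 (HBC m Hm)) (Kf_nonneg cb l) (Kf_c cb l) (Kf_S cb l) ltac:(lra) ltac:(ring)) as EL.
  assert (DL : forall i, (1 <= i <= l - 1)%nat -> 1 * (-1)^(l-i+1) * cb (l-i)%nat > INR l - 2 + Kf cb l i * Kf cb l i / 2).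
  { apply (diag_gen l cb b 1 (INR l - 2)); auto.
    - unfold cb. simpl. lra.
    - unfold cb. lra.
    - intros j Hj Ho. specialize (Hodd j Hj Ho). lra.
    - intros j Hj He. specialize (Heven j Hj He). lra. }
  specialize (EL DL).
  assert (CL : forall i, (1 <= i <= l - 1)%nat ->
     INR l - 2 - /2*((INR i - 1)/2) - (/2*((INR l - INR i)/2) + (1-1)/2) - /2*((INR i - 1)/2) - 1 / 2 >= 1/4).
  { intros i Hi. pose proof (Hi_range i Hi). lra. }
  specialize (EL CL (or_intror HLl)).
  pose proof (endpoint_bound l ca (Kf ca l) (INR l) (-1) (2 * INR l - 5) x0 ltac:(lia) H00
    (fun m Hm => proj1 (HBC m Hm)) (Kf_nonneg ca l) (Kf_c ca l) (Kf_S ca l) ltac:(lra) ltac:(ring)) as E0.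
  assert (D0 : forall i, (1 <= i <= l - 1)%nat -> -1 * (-1)^(l-i+1) * ca (l-i)%nat > 2 * INR l - 5 + Kf ca l i * Kf ca l i / 2).
  { apply (diag_gen l ca a (-1) (2 * INR l - 5)); auto.
    - unfold ca. simpl. lra.
    - unfold ca. lra.
    - intros j Hj Ho. specialize (Hodd j Hj Ho). lra.
    - intros j Hj He. specialize (Heven j Hj He). lra. }
  specialize (E0 D0).
  assert (C0 : forall i, (1 <= i <= l - 1)%nat ->
     2 * INR l - 5 - /2*((INR i - 1)/2) - (/2*((INR l - INR i)/2) + (INR l - 1)/2) - /2*((INR i - 1)/2) - -1 / 2 >= 1/4).
  { intros i Hi. pose proof (Hi_range i Hi). lra. }
  assert (T0 : - -1 / 2 - (/ (2 * INR l)) * ((INR l - 1)/2) >= 1/4).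
  { replace (/ (2 * INR l) * ((INR l - 1)/2)) with (1/4 - / (4 * INR l)) by (field; lra).
    assert (0 < / (4 * INR l)) by (apply Rinv_0_lt_compat; lra). lra. }
  specialize (E0 C0 (or_introl T0)).
  destruct (Rle_dec 1 0) as [|_] in EL; [lra|].
  destruct (Rle_dec (-1) 0) as [_|] in E0; [|lra].
  rewrite sum1_plus.
  replace (sum1 (fun i => xL i ^ 2) (l - 1)) with (sum1 (fun i => xL i * xL i) (l-1)) by (apply sum1_ext; intros; ring).
  replace (sum1 (fun i => x0 i ^ 2) (l - 1)) with (sum1 (fun i => x0 i * x0 i) (l-1)) by (apply sum1_ext; intros; ring).
  replace (x0 l ^ 2) with (x0 l * x0 l) by ring.
  lra.
Qed.

Close Scope bool_scope.


Lemma alg l a b : (2 <= l)%nat -> CoefCond l a b ->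
  exists M, 0 < M /\
  forall xL x0 : nat -> R, xL 0%nat = 0 -> x0 0%nat = 0 -> xL l = 0 ->
  (forall j, (1 <= j <= l - 1)%nat ->
     x0 (l + j)%nat = a (l + j)%nat (l - j)%nat * x0 (l - j)%nat /\
     xL (l + j)%nat = b (l + j)%nat (l - j)%nat * xL (l - j)%nat) ->
  sum1 (Phi xL) l - sum1 (Phi x0) l >=
    M * (sum1 (fun i => xL i ^ 2 + x0 i ^ 2) (l - 1) + x0 l ^ 2).
Proof.
  intros Hl HC.
  destruct (Nat.eq_dec l 2) as [->|N2].
  - destruct HC as [C2 _]. destruct (C2 eq_refl) as [Hb Ha].
    set (M := Rmin (Rmin (b 3%nat 1%nat - 1/2) (1/2 - a 3%nat 1%nat)) (1/2)).
    assert (M1 : M <= b 3%nat 1%nat - 1/2) by (unfold M; repeat (apply Rmin_glb_lt || apply Rmin_l || idtac);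
      eapply Rle_trans; [apply Rmin_l|apply Rmin_l]).
    assert (M2 : M <= 1/2 - a 3%nat 1%nat) by (unfold M; eapply Rle_trans; [apply Rmin_l|apply Rmin_r]).
    assert (M3 : M <= 1/2) by (unfold M; apply Rmin_r).
    assert (MP : 0 < M) by (unfold M; repeat apply Rmin_glb_lt; lra).
    exists M; split; auto.
    intros xL x0 HL0 H00 HLl HBC. destruct (HBC 1%nat ltac:(lia)) as [E0 EL].
    simpl in E0, EL. unfold Phi. simpl.
    rewrite HL0, H00, HLl, E0, EL.
    assert (0 <= xL 1%nat * xL 1%nat) by apply Rle_0_sqr.
    assert (0 <= x0 1%nat * x0 1%nat) by apply Rle_0_sqr.
    assert (0 <= x0 2%nat * x0 2%nat) by apply Rle_0_sqr.
    assert (0 <= (b 3%nat 1%nat - 1/2 - M) * (xL 1%nat * xL 1%nat)) by (apply Rmult_le_pos; lra).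
    assert (0 <= (1/2 - a 3%nat 1%nat - M) * (x0 1%nat * x0 1%nat)) by (apply Rmult_le_pos; lra).
    assert (0 <= (1/2 - M) * (x0 2%nat * x0 2%nat)) by (apply Rmult_le_pos; lra).
    nra.
  - destruct (Nat.eq_dec l 3) as [->|N3].
    + destruct HC as [_ [C3 _]]. destruct (C3 eq_refl) as [Hb51 [Hb42 [Ha51 Ha42]]].
      set (M := Rmin (Rmin (Rmin (-(1/2) - b 5%nat 1%nat) (b 4%nat 2%nat - 1/2))
                           (Rmin (a 5%nat 1%nat - 1/2) (1/2 - a 4%nat 2%nat))) (1/4)).
      assert (M1 : M <= -(1/2) - b 5%nat 1%nat) by
        (unfold M; eapply Rle_trans; [apply Rmin_l|]; eapply Rle_trans; [apply Rmin_l|apply Rmin_l]).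
      assert (M2 : M <= b 4%nat 2%nat - 1/2) by
        (unfold M; eapply Rle_trans; [apply Rmin_l|]; eapply Rle_trans; [apply Rmin_l|apply Rmin_r]).
      assert (M3 : M <= a 5%nat 1%nat - 1/2) by
        (unfold M; eapply Rle_trans; [apply Rmin_l|]; eapply Rle_trans; [apply Rmin_r|apply Rmin_l]).
      assert (M4 : M <= 1/2 - a 4%nat 2%nat) by
        (unfold M; eapply Rle_trans; [apply Rmin_l|]; eapply Rle_trans; [apply Rmin_r|apply Rmin_r]).
      assert (M5 : M <= 1/4) by (unfold M; apply Rmin_r).
      assert (MP : 0 < M) by (unfold M; repeat apply Rmin_glb_lt; lra).
      exists M; split; auto.
      intros xL x0 HL0 H00 HLl HBC. destruct (HBC 1%nat ltac:(lia)) as [E01 EL1].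
      destruct (HBC 2%nat ltac:(lia)) as [E02 EL2].
      simpl in E01, EL1, E02, EL2. unfold Phi. simpl.
      rewrite HL0, H00, HLl, E01, EL1, E02, EL2.
      set (p := xL 1%nat). set (q := xL 2%nat). set (u := x0 1%nat). set (v := x0 2%nat). set (w := x0 3%nat).
      assert (0 <= (-(1/2) - b 5%nat 1%nat - M) * (p*p)) by (apply Rmult_le_pos; [lra|apply Rle_0_sqr]).
      assert (0 <= (b 4%nat 2%nat - 1/2 - M) * (q*q)) by (apply Rmult_le_pos; [lra|apply Rle_0_sqr]).
      assert (0 <= (a 5%nat 1%nat - 1/2 - M) * (u*u)) by (apply Rmult_le_pos; [lra|apply Rle_0_sqr]).
      assert (0 <= (1/2 - a 4%nat 2%nat - M) * (v*v)) by (apply Rmult_le_pos; [lra|apply Rle_0_sqr]).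
      assert (0 <= (1/4 - M) * (w*w)) by (apply Rmult_le_pos; [lra|apply Rle_0_sqr]).
      assert (0 <= (u - w/2) * (u - w/2)) by apply Rle_0_sqr.
      nra.
    + exists (1/4); split; [lra|]. apply alg4; auto. lia.
Qed.


Theorem mainTheorem5 (l : nat) (a b : nat -> nat -> R) :
  (2 <= l)%nat -> CoefCond l a b ->
  exists M : R, 0 < M /\
    forall (L : R) (d : nat -> R -> R),
      0 < L -> Ck_on (2 * l + 1) L d -> BC l L a b d ->
      sum1 (fun j => (-1) ^ (j + 1) * ip L (d (2 * j + 1)%nat) (d 0%nat)) l
        >= M * (sum1 (fun i => (d i L) ^ 2 + (d i 0) ^ 2) (l - 1) + (d l 0) ^ 2)
      /\ M * (sum1 (fun i => (d i L) ^ 2 + (d i 0) ^ 2) (l - 1) + (d l 0) ^ 2) >= 0.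
Proof.
  intros Hl HC. destruct (alg l a b Hl HC) as [M [HM HA]].
  exists M; split; auto. intros L d HL Hck HBC.
  destruct HBC as [B0 [B1 [B2 B3]]].
  split.
  - rewrite (analysis_part l L d HL Hck).
    apply (HA (fun i => d i L) (fun i => d i 0)); auto.
  - apply Rle_ge, Rmult_le_pos; [lra|].
    apply Rplus_le_le_0_compat; [|apply pow2_ge_0].
    apply sum1_nonneg. intros; apply Rplus_le_le_0_compat; apply pow2_ge_0.
Qed.
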